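(* For all real numbers $a,b>0$ and $0\le v\le 1$, $$G_v(a,b)\le \left\{1+\frac{\mu^2}{2}\left(\log a-\log b\right)^2\right\}G_v(a,b)\le A_v(a,b),$$ where $\mu:=\min\{1-v,v\}$.
   Context: For $a,b>0$ and $0\le v\le 1$: $A_v(a,b):=(1-v)a+vb$ is the weighted arithmetic mean and $G_v(a,b):=a^{1-v}b^v$ is the weighted geometric mean. *)

(* Defs.v *)
From Stdlib Require Import Reals.
Open Scope R_scope.

Definition Amean (v a b : R) : R := (1 - v) * a + v * b.

Definition Gmean (v a b : R) : R := Rpower a (1 - v) * Rpower b v.

(* Main.v *)
Require Import Defs.
From Stdlib Require Import Reals Lra Psatz.
From Coquelicot Require Import Coquelicot.
Open Scope R_scope.

Lemma mono0 (f f' : R -> R) (x : R) : 0 <= x ->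
  (forall c, derivable_pt_lim f c (f' c)) ->
  (forall c, 0 <= c <= x -> 0 <= f' c) -> f 0 <= f x.
Proof.
  intros Hx Hd Hp. destruct (Req_dec x 0) as [->|Hn]; [lra|].
  destruct (MVT_cor3 f f' 0 x) as [c [H1 [H2 H3]]]; [lra| intros; apply Hd|].
  rewrite H3. specialize (Hp c ltac:(lra)). nra.
Qed.

Lemma e2 x : 0 <= x -> 1 + x + x^2/2 <= exp x.
Proof.
  intros Hx.
  set (f := fun x => exp x - 1 - x - x^2/2).
  assert (H : f 0 <= f x).
  { apply (mono0 f (fun x => exp x - 1 - x) x Hx).
    - intros c. apply is_derive_Reals. unfold f; auto_derive; auto; field.
    - intros c _. pose proof (exp_ineq1_le c). lra. }
  unfold f in H; simpl in H. rewrite exp_0 in H. simpl. lra.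
Qed.

Lemma e3 x : 0 <= x -> 1 + x + x^2/2 + x^3/6 <= exp x.
Proof.
  intros Hx.
  set (f := fun x => exp x - 1 - x - x^2/2 - x^3/6).
  assert (H : f 0 <= f x).
  { apply (mono0 f (fun x => exp x - 1 - x - x^2/2) x Hx).
    - intros c. apply is_derive_Reals. unfold f; auto_derive; auto; field.
    - intros c Hc. pose proof (e2 c ltac:(lra)). lra. }
  unfold f in H; simpl in H. rewrite exp_0 in H. simpl. lra.
Qed.

Lemma k2 z : 0 <= z -> exp (-z) <= 1 - z + z^2/2.
Proof.
  intros Hz.
  set (f := fun z => 1 - z + z^2/2 - exp (-z)).
  assert (H : f 0 <= f z).
  { apply (mono0 f (fun z => -1 + z + exp (-z)) z Hz).
    - intros c. apply is_derive_Reals. unfold f; auto_derive; auto; field.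
    - intros c Hc. pose proof (exp_ineq1_le (-c)). lra. }
  unfold f in H; simpl in H. rewrite Ropp_0, exp_0 in H. simpl. lra.
Qed.

Lemma k3 z : 0 <= z -> 1 - z + z^2/2 - z^3/6 <= exp (-z).
Proof.
  intros Hz.
  set (f := fun z => exp (-z) - (1 - z + z^2/2 - z^3/6)).
  assert (H : f 0 <= f z).
  { apply (mono0 f (fun z => 1 - z + z^2/2 - exp (-z)) z Hz).
    - intros c. apply is_derive_Reals. unfold f; auto_derive; auto; field.
    - intros c Hc. pose proof (k2 c ltac:(lra)). lra. }
  unfold f in H; simpl in H. rewrite Ropp_0, exp_0 in H. simpl. lra.
Qed.

Lemma L (al be s : R) : 0 <= al -> 0 <= be -> al + be = 1 -> 0 <= s ->
  1 + Rmin al be ^ 2 / 2 * s ^ 2 <= be * exp (al * s) + al * exp (- (be * s)).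
Proof.
  intros Ha Hb Hab Hs.
  pose proof (e3 (al * s) ltac:(nra)) as P.
  pose proof (k3 (be * s) ltac:(nra)) as Q.
  pose proof (exp_ineq1_le (- (be * s))) as Q1.
  assert (Hbs : 0 <= be * s) by nra.
  assert (Has : 0 <= al * s) by nra.
  destruct (Rle_dec be al) as [Hle|Hlt].
  - rewrite Rmin_right by lra.
    assert (be * (1 + al * s + (al * s) ^ 2 / 2 + (al * s) ^ 3 / 6)
            + al * (1 - be * s + (be * s) ^ 2 / 2 - (be * s) ^ 3 / 6)
            >= 1 + be ^ 2 / 2 * s ^ 2).
    { replace be with (1 - al) by lra.
      assert (0 <= (1-al) * s^2 * (al - (1-al))) by (apply Rmult_le_pos; nra).
      assert (0 <= al*(1-al) * s^3 * (al^2 - (1-al)^2)).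
      { apply Rmult_le_pos; [apply Rmult_le_pos; nra|nra]. }
      nra. }
    nra.
  - rewrite Rmin_left by lra.
    destruct (Rle_dec (be * s) 3).
    + assert (be * (1 + al * s + (al * s) ^ 2 / 2 + (al * s) ^ 3 / 6)
            + al * (1 - be * s + (be * s) ^ 2 / 2 - (be * s) ^ 3 / 6)
            >= 1 + al ^ 2 / 2 * s ^ 2).
      { assert (0 <= al * s^2 * (be - al) * (1 - be * s / 3)).
        { apply Rmult_le_pos; [apply Rmult_le_pos; nra|lra]. }
        replace be with (1 - al) in * by lra. nra. }
      nra.
    + assert (be * (1 + al * s + (al * s) ^ 2 / 2 + (al * s) ^ 3 / 6)
            + al * (1 + - (be * s))
            >= 1 + al ^ 2 / 2 * s ^ 2).
      { assert (0 <= al^3 * s^2 * (be * s / 3 - 1)).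
        { apply Rmult_le_pos; [apply Rmult_le_pos; nra|lra]. }
        replace be with (1 - al) in * by lra. nra. }
      nra.
Qed.

Theorem theorem2p1 (a b v : R) :
  0 < a -> 0 < b -> 0 <= v <= 1 ->
  let mu := Rmin (1 - v) v in
  Gmean v a b <= (1 + mu ^ 2 / 2 * (ln a - ln b) ^ 2) * Gmean v a b /\
  (1 + mu ^ 2 / 2 * (ln a - ln b) ^ 2) * Gmean v a b <= Amean v a b.
Proof.
  intros Ha Hb Hv mu.
  unfold Gmean, Amean, Rpower.
  rewrite <- exp_plus.
  set (x := ln a). set (y := ln b).
  set (g := (1 - v) * x + v * y).
  assert (HG : 0 < exp g) by apply exp_pos.
  assert (Ea : a = exp g * exp (v * (x - y))).
  { rewrite <- exp_plus. replace (g + v * (x - y)) with x by (unfold g; ring). unfold x.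
    rewrite exp_ln; auto. }
  assert (Eb : b = exp g * exp (- ((1 - v) * (x - y)))).
  { rewrite <- exp_plus. replace (g + - ((1 - v) * (x - y))) with y by (unfold g; ring). unfold y.
    rewrite exp_ln; auto. }
  assert (Hm : 0 <= mu ^ 2 / 2 * (x - y) ^ 2).
  { apply Rmult_le_pos; [|apply pow2_ge_0]. pose proof (pow2_ge_0 mu). lra. }
  split; [nra|].
  clearbody g x y. rewrite Ea, Eb.
  assert (Hf : 1 + mu ^ 2 / 2 * (x - y) ^ 2 <=
     (1 - v) * exp (v * (x - y)) + v * exp (- ((1 - v) * (x - y)))).
  { destruct (Rle_dec 0 (x - y)).
    - pose proof (L v (1 - v) (x - y) ltac:(lra) ltac:(lra) ltac:(lra) r) as H.
      unfold mu. rewrite Rmin_comm. lra.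
    - pose proof (L (1 - v) v (y - x) ltac:(lra) ltac:(lra) ltac:(lra) ltac:(lra)) as H.
      unfold mu. replace ((x - y) ^ 2) with ((y - x) ^ 2) by ring.
      replace (v * (x - y)) with (- (v * (y - x))) by ring.
      replace (- ((1 - v) * (x - y))) with ((1 - v) * (y - x)) by ring.
      lra. }
  nra.
Qed.
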